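(* Let $R\in\mathbb{R}^{m\times N}$, $\lambda\ge 0$, and let $\sigma_1$ be the largest singular value of $R$, with corresponding left singular vector $u^1\in\mathbb{R}^m$ and right singular vector $v_1\in\mathbb{R}^{N}$ (unit vectors with $R v_1=\sigma_1 u^1$). Consider the problem $$\min_{d\in\mathbb{R}^m,\ \|d\|_2=1,\ x\in\mathbb{R}^{1\times N}}\ \frac12\|d\,x-R\|_F^2+\lambda\,\big\|\,\|x\|_2\,\big\|_0 ,$$ where $\|\,\|x\|_2\|_0$ equals $1$ if $x\neq 0$ and $0$ if $x=0$. If $\frac12\|\sigma_1 u^1 v_1^T-R\|_F^2\le\frac12\|R\|_F^2-\lambda$, then $(d,x)=(u^1,\sigma_1 v_1^T)$ is a minimizer. Otherwise, for any $d_0\in\mathbb{R}^m$ with $\|d_0\|_2=1$, the pair $(d_0,0)$ is a minimizer.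
   Context: This is the per-atom update of a K-SVD-type dictionary learning scheme with the row-sparsity ($\ell_{2,0}$) penalty counting nonzero rows of the representation matrix, where $R$ is the residual after removing the contribution of the current atom; in the paper $d_0$ is the current (previous) atom. *)

(* Defs.v *)
From mathcomp Require Import all_boot all_order all_algebra.
From mathcomp Require Import reals.
Set Implicit Arguments. Unset Strict Implicit. Unset Printing Implicit Defensive.
Import Order.TTheory GRing.Theory Num.Theory.
Local Open Scope ring_scope.

(* Squared Frobenius norm ||A||_F^2; for a column vector this is ||d||_2^2. *)
Definition frob2 (K : realType) (p q : nat) (A : 'M[K]_(p, q)) : K :=
  \sum_(i < p) \sum_(j < q) A i j ^+ 2.

(* s is the largest singular value of R: the singular values are the square
   roots of the eigenvalues of R^T R, so s >= 0, s^2 is an eigenvalue of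
   R^T R and every eigenvalue of R^T R is at most s^2. *)
Definition largest_singular_value (K : realType) (m N : nat)
    (R : 'M[K]_(m, N)) (s : K) : Prop :=
  [/\ 0 <= s, eigenvalue (R^T *m R) (s ^+ 2)
    & forall a, eigenvalue (R^T *m R) a -> a <= s ^+ 2].

Definition l20 (K : realType) (N : nat) (x : 'rV[K]_N) : K :=
  if x == 0 then 0 else 1.

Definition obj (K : realType) (m N : nat) (R : 'M[K]_(m, N)) (lam : K)
    (d : 'cV[K]_m) (x : 'rV[K]_N) : K :=
  2^-1 * frob2 (d *m x - R) + lam * l20 x.

Definition is_minimizer (K : realType) (m N : nat) (R : 'M[K]_(m, N)) (lam : K)
    (d : 'cV[K]_m) (x : 'rV[K]_N) : Prop :=
  frob2 d = 1 /\
  forall (d' : 'cV[K]_m) (x' : 'rV[K]_N), frob2 d' = 1 ->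
    obj R lam d x <= obj R lam d' x'.

(* Main.v *)
Require Import Defs.
From mathcomp Require Import all_boot all_order all_algebra.
From mathcomp Require Import classical_sets boolp reals.
From mathcomp Require Import ring lra.
Set Implicit Arguments. Unset Strict Implicit. Unset Printing Implicit Defensive.
Import Order.TTheory GRing.Theory Num.Theory.
Local Open Scope ring_scope.

Section Spec.
Variable K : realType.

Definition form n (B : 'M[K]_n) (x y : 'rV[K]_n) : K := (x *m B *m y^T) 0 0.

Lemma formE n (B : 'M[K]_n) x y :
  form B x y = \sum_j (\sum_i x 0 i * B i j) * y 0 j.
Proof. by rewrite /form mxE; apply: eq_bigr => j _; rewrite !mxE. Qed.

Lemma form1E n (x : 'rV[K]_n) : form 1%:M x x = \sum_i x 0 i ^+ 2.
Proof. by rewrite /form mulmx1 mxE; apply: eq_bigr => j _; rewrite !mxE expr2. Qed.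

Lemma formDl n (B : 'M[K]_n) x y z t :
  form B (x + t *: y) z = form B x z + t * form B y z.
Proof. by rewrite /form !mulmxDl -!scalemxAl !mxE. Qed.

Lemma form_sym n (B : 'M[K]_n) x y : B^T = B -> form B x y = form B y x.
Proof.
move=> sB; rewrite /form.
have -> : (y *m B *m x^T) 0 0 = ((y *m B *m x^T)^T) 0 0 by rewrite [RHS]mxE.
by rewrite !trmx_mul trmxK sB mulmxA.
Qed.

Lemma formDr n (B : 'M[K]_n) x y z t : B^T = B ->
  form B z (x + t *: y) = form B z x + t * form B z y.
Proof. by move=> sB; rewrite !(form_sym z) // formDl. Qed.

Lemma quad_disc (a b c : K) : 0 <= c ->
  (forall t, 0 <= a + 2 * t * b + t ^+ 2 * c) -> b ^+ 2 <= a * c.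
Proof.
move=> c0 H; have [ce|cn0] := eqVneq c 0.
  rewrite ce in H *.
  have [->|bn0] := eqVneq b 0; first by rewrite expr0n mulr0.
  have := H (- (a + 1) / (2 * b)).
  have -> : a + 2 * (- (a + 1) / (2 * b)) * b + (- (a + 1) / (2 * b)) ^+ 2 * 0 = -1.
    by field; rewrite bn0.
  by rewrite ler0N1.
have cp : 0 < c by rewrite lt_neqAle eq_sym cn0 c0.
have := H (- b / c).
have -> : a + 2 * (- b / c) * b + (- b / c) ^+ 2 * c = (a * c - b ^+ 2) / c.
  by field.
by rewrite pmulr_lge0 ?invr_gt0 // subr_ge0.
Qed.

Lemma form_CS n (B : 'M[K]_n) x y : B^T = B -> (forall w, 0 <= form B w w) ->
  form B x y ^+ 2 <= form B x x * form B y y.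
Proof.
move=> sB psd; apply: quad_disc => // t.
have := psd (x + t *: y); rewrite formDl !formDr // (form_sym y x) //.
set a := form B x x; set b := form B x y; set c := form B y y.
by have -> : a + t * b + t * (b + t * c) = a + 2 * t * b + t ^+ 2 * c by ring.
Qed.

Lemma sq_le_sum n (w : 'rV[K]_n) i : w 0 i ^+ 2 <= \sum_k w 0 k ^+ 2.
Proof.
by rewrite (bigD1 i) //= lerDl; apply: sumr_ge0 => k _; rewrite sqr_ge0.
Qed.

Lemma quad_bound n (E : 'M[K]_n) w :
  form E w w <= (\sum_j \sum_i `|E i j|) * form 1%:M w w.
Proof.
rewrite formE form1E mulr_suml; apply: ler_sum => j _.
rewrite !mulr_suml; apply: ler_sum => i _.
have hi := sq_le_sum w i; have hj := sq_le_sum w j.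
set S := \sum_k _ in hi hj *.
have pq : `|w 0 i| * `|w 0 j| <= S.
  rewrite -(real_normK (num_real (w 0 i))) in hi.
  rewrite -(real_normK (num_real (w 0 j))) in hj.
  have := normr_ge0 (w 0 i); have := normr_ge0 (w 0 j).
  set p := `|w 0 i| in hi *; set q := `|w 0 j| in hj *.
  have h2 : 2 * (p * q) <= p ^+ 2 + q ^+ 2.
    by have := sqr_ge0 (p - q); rewrite sqrrB mulr2n; lra.
  lra.
apply: le_trans (ler_norm _) _.
rewrite !normrM mulrAC [`|E i j| * S]mulrC.
by apply: ler_wpM2r.
Qed.

Lemma n2_gt0 n (w : 'rV[K]_n) : w != 0 -> 0 < form 1%:M w w.
Proof.
move=> wn0; rewrite form1E lt_neqAle sumr_ge0 ?andbT; last by move=> k _; rewrite sqr_ge0.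
apply/negP => /eqP/esym H; move/negP: wn0; apply; apply/eqP/rowP => k.
rewrite mxE; apply/eqP; rewrite -sqrf_eq0; apply/eqP.
by apply: (psumr_eq0P _ H) => // l _; rewrite sqr_ge0.
Qed.

Lemma form0 n (B : 'M[K]_n) : form B 0 0 = 0.
Proof. by rewrite /form !mul0mx mxE. Qed.

Lemma unitmxN n (B : 'M[K]_n) : (- B \in unitmx) = (B \in unitmx).
Proof. by rewrite -scaleN1r !unitmxE detZ unitrMr // unitrX // unitrN1. Qed.

Lemma rayleigh n (A : 'M[K]_n) (c : K) : A^T = A ->
  (forall a, eigenvalue A a -> a <= c) ->
  forall w, form A w w <= c * form 1%:M w w.
Proof.
case: n A => [|n] A sA Hc w.
  by rewrite formE form1E !big_ord0 mulr0.
pose n2 (w : 'rV[K]_n.+1) := form 1%:M w w.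
pose S : set K := fun x => exists2 w : 'rV[K]_n.+1, w != 0 & x = form A w w / n2 w.
pose C := \sum_j \sum_i `|A i j|.
have ub : forall w, w != 0 -> form A w w / n2 w <= C.
  by move=> v vn0; rewrite ler_pdivrMr ?n2_gt0 // quad_bound.
pose e : 'rV[K]_n.+1 := const_mx 1.
have en0 : e != 0.
  by apply/negP => /eqP/rowP/(_ ord0); rewrite !mxE => /eqP; rewrite oner_eq0.
have hs : has_sup S.
  split; first by exists (form A e e / n2 e); exists e.
  by exists C => x [v vn0 ->]; apply: ub.
pose M := sup S.
have upM : forall w, form A w w <= M * n2 w.
  move=> v; have [->|vn0] := eqVneq v 0; first by rewrite /n2 !form0 mulr0.
  rewrite -ler_pdivrMr ?n2_gt0 //; apply: sup_upper_bound => //.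
  by exists v.
pose B := M%:M - A.
have formB : forall w, form B w w = M * n2 w - form A w w.
  move=> v; rewrite /B /n2 /form mulmxBr mul_mx_scalar mulmxBl -scalemxAl mulmx1.
  by rewrite !mxE.
have psdB : forall w, 0 <= form B w w by move=> v; rewrite formB subr_ge0.
have sB : B^T = B by rewrite /B linearB /= tr_scalar_mx sA.
have nuB : ~~ (B \in unitmx).
  apply/negP => Bu; pose Bi := invmx B.
  pose C' := \sum_j \sum_i `|Bi^T i j|.
  have key : forall w, w != 0 -> n2 w <= C' * form B w w.
    move=> v vn0; pose y := v *m Bi.
    have hy : y *m B = v by rewrite /y mulmxKV.
    have e1 : form B y v = n2 v by rewrite /form hy /n2 /form mulmx1.
    have e2 : form B y y = form Bi^T v v.
      by rewrite /form hy /y trmx_mul mulmxA.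
    have cs := form_CS y v sB psdB; rewrite e1 e2 in cs.
    have qb := quad_bound Bi^T v.
    have n2p := n2_gt0 vn0.
    have fBp := psdB v.
    have : n2 v * n2 v <= n2 v * (C' * form B v v).
      apply: le_trans; first by rewrite -expr2; exact: cs.
      rewrite mulrA [n2 v * C']mulrC; apply: ler_wpM2r => //.
    by rewrite ler_pM2l.
  have C'p : 0 < C'.
    have := key e en0; have := n2_gt0 en0; have := psdB e.
    move=> h1 h2 h3; rewrite ltNge; apply/negP => C'n.
    by have := lt_le_trans h2 (le_trans h3 (mulr_le0_ge0 C'n h1)); rewrite ltxx.
  have iCp : 0 < C'^-1 by rewrite invr_gt0.
  have [x [v vn0 ->]] := sup_adherent iCp hs.
  apply/negP; rewrite -leNgt ler_pdivrMr ?n2_gt0 //.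
  have k := key v vn0; rewrite formB in k.
  have : n2 v / C' <= M * n2 v - form A v v.
    by rewrite ler_pdivrMr // [_ * C']mulrC.
  have -> : (M - C'^-1) * n2 v = M * n2 v - n2 v / C' by rewrite mulrBl [C'^-1 * _]mulrC.
  lra.
have eM : eigenvalue A M.
  rewrite /eigenvalue /eigenspace kermx_eq0 row_free_unit.
  by rewrite -opprB unitmxN.
apply: le_trans (upM w) _; apply: ler_wpM2r; last exact: Hc.
by rewrite /n2 form1E sumr_ge0 // => k _; rewrite sqr_ge0.
Qed.


Lemma frob2_col m (d : 'cV[K]_m) : frob2 d = \sum_i d i 0 ^+ 2.
Proof. by apply: eq_bigr => i _; rewrite big_ord1. Qed.

Lemma frob2_row N (x : 'rV[K]_N) : frob2 x = form 1%:M x x.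
Proof. by rewrite /frob2 big_ord1 form1E. Qed.

Lemma form1_tr m (d : 'cV[K]_m) : form 1%:M d^T d^T = frob2 d.
Proof. by rewrite form1E frob2_col; apply: eq_bigr => i _; rewrite mxE. Qed.

Lemma frob2_expand m N (R : 'M[K]_(m, N)) (d : 'cV[K]_m) (x : 'rV[K]_N) :
  frob2 (d *m x - R) = frob2 d * frob2 x
     - 2 * (\sum_i \sum_j d i 0 * x 0 j * R i j) + frob2 R.
Proof.
rewrite frob2_col /frob2 big_ord1 mulr_suml mulr_sumr -sumrB -big_split /=.
apply: eq_bigr => i _; rewrite mulr_sumr mulr_sumr -sumrB -big_split /=.
apply: eq_bigr => j _; rewrite !mxE big_ord1 ?mxE; ring.
Qed.

Lemma pos_form1 n : forall w : 'rV[K]_n, 0 <= form 1%:M w w.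
Proof. by move=> w; rewrite form1E sumr_ge0 // => k _; rewrite sqr_ge0. Qed.

Lemma lower_bound m N (R : 'M[K]_(m, N)) (s : K) (d : 'cV[K]_m) (x : 'rV[K]_N) :
  largest_singular_value R s -> frob2 d = 1 ->
  frob2 R - s ^+ 2 <= frob2 (d *m x - R).
Proof.
move=> [s0 _ Hev] d1.
pose z := d^T *m R.
have bil : \sum_i \sum_j d i 0 * x 0 j * R i j = \sum_j x 0 j * z 0 j.
  rewrite exchange_big; apply: eq_bigr => j _; rewrite mxE mulr_sumr.
  by apply: eq_bigr => i _; rewrite mxE; ring.
rewrite frob2_expand bil d1 mul1r frob2_row.
have sq : 0 <= form 1%:M (x - z) (x - z) by apply: pos_form1.
have e : form 1%:M (x - z) (x - z) = form 1%:M x x - 2 * (\sum_j x 0 j * z 0 j) + form 1%:M z z.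
  rewrite !form1E mulr_sumr -sumrB -big_split /=; apply: eq_bigr => j _.
  by rewrite !mxE; ring.
suff : form 1%:M z z <= s ^+ 2 by lra.
pose y := z *m R^T.
have sym1 : (1%:M : 'M[K]_m)^T = 1%:M by rewrite trmx1.
have cs := form_CS d^T y sym1 (@pos_form1 m).
have e1 : form 1%:M d^T y = form 1%:M z z.
  by rewrite /form !mulmx1 /y trmx_mul trmxK mulmxA.
have e2 : form 1%:M y y = form (R^T *m R) z z.
  by rewrite /form mulmx1 /y trmx_mul trmxK !mulmxA.
have symA : (R^T *m R)^T = R^T *m R by rewrite trmx_mul trmxK.
have ray := rayleigh symA Hev z.
rewrite e1 e2 form1_tr d1 mul1r in cs.
have nz := pos_form1 z.
have [z0|zp] := eqVneq (form 1%:M z z) 0; first by rewrite z0 sqr_ge0.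
have zpos : 0 < form 1%:M z z by rewrite lt_neqAle eq_sym zp nz.
rewrite -(ler_pM2r zpos) -expr2; exact: le_trans cs ray.
Qed.

End Spec.

Lemma l20_le1 (K : realType) N (x : 'rV[K]_N) : l20 x <= 1.
Proof. by rewrite /l20; case: (x == 0). Qed.

Lemma obj0 (K : realType) m N (R : 'M[K]_(m, N)) lam (d : 'cV[K]_m) :
  obj R lam d 0 = 2^-1 * frob2 R.
Proof.
rewrite /obj /l20 eqxx mulr0 addr0 mulmx0 sub0r; congr (_ * _).
by apply: eq_bigr => i _; apply: eq_bigr => j _; rewrite mxE sqrrN.
Qed.

Lemma objLB (K : realType) m N (R : 'M[K]_(m, N)) lam s (d : 'cV[K]_m) (x : 'rV[K]_N) :
  largest_singular_value R s -> frob2 d = 1 -> x != 0 ->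
  2^-1 * (frob2 R - s ^+ 2) + lam <= obj R lam d x.
Proof.
move=> Hs d1 xn0; rewrite /obj /l20 (negbTE xn0) mulr1 lerD2r.
by apply: ler_wpM2l; [rewrite invr_ge0 | exact: lower_bound].
Qed.

Lemma F1E (K : realType) m N (R : 'M[K]_(m, N)) (s1 : K) (u1 : 'cV[K]_m) (v1 : 'cV[K]_N) :
  frob2 u1 = 1 -> frob2 v1 = 1 -> R *m v1 = s1 *: u1 ->
  frob2 (s1 *: (u1 *m v1^T) - R) = frob2 R - s1 ^+ 2.
Proof.
move=> u1n v1n Ruv.
rewrite scalemxAr frob2_expand u1n mul1r.
have -> : frob2 (s1 *: v1^T) = s1 ^+ 2.
  rewrite /frob2 big_ord1 -[RHS]mulr1 -v1n frob2_col mulr_sumr.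
  by apply: eq_bigr => j _; rewrite !mxE; ring.
have -> : \sum_i \sum_j u1 i 0 * (s1 *: v1^T) 0 j * R i j = s1 ^+ 2.
  rewrite -[RHS]mulr1 -u1n frob2_col mulr_sumr; apply: eq_bigr => i _.
  have := congr1 (fun M : 'cV[K]_m => M i 0) Ruv; rewrite !mxE => e.
  have -> : s1 ^+ 2 * u1 i 0 ^+ 2 = s1 * u1 i 0 * (\sum_j R i j * v1 j 0).
    by rewrite e; ring.
  rewrite mulr_sumr; apply: eq_bigr => j _; rewrite !mxE; ring.
ring.
Qed.

Theorem proposition3 (K : realType) (m N : nat) (R : 'M[K]_(m, N)) (lam : K)
    (s1 : K) (u1 : 'cV[K]_m) (v1 : 'cV[K]_N) :
  0 <= lam ->
  largest_singular_value R s1 ->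
  frob2 u1 = 1 -> frob2 v1 = 1 ->
  R *m v1 = s1 *: u1 ->
  (2^-1 * frob2 (s1 *: (u1 *m v1^T) - R) <= 2^-1 * frob2 R - lam ->
     is_minimizer R lam u1 (s1 *: v1^T)) /\
  (~ (2^-1 * frob2 (s1 *: (u1 *m v1^T) - R) <= 2^-1 * frob2 R - lam) ->
     forall d0 : 'cV[K]_m, frob2 d0 = 1 -> is_minimizer R lam d0 0).
Proof.
move=> lam0 Hs u1n v1n Ruv; rewrite (F1E u1n v1n Ruv); split.
  move=> H; split => // d' x' d'n.
  have ub : obj R lam u1 (s1 *: v1^T) <= 2^-1 * (frob2 R - s1 ^+ 2) + lam.
    rewrite /obj -scalemxAr (F1E u1n v1n Ruv) lerD2l.
    by rewrite -[X in _ <= X]mulr1 ler_wpM2l // l20_le1.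
  have [->|xn0] := eqVneq x' 0.
    rewrite obj0; apply: le_trans ub _; lra.
  apply: le_trans ub _; exact: objLB Hs d'n xn0.
move=> H d0 d0n; split => // d' x' d'n.
have [->|xn0] := eqVneq x' 0; first by rewrite !obj0.
rewrite obj0; apply: le_trans (objLB lam Hs d'n xn0); lra.
Qed.
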